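(* Let $i,j$ be positive integers and let $w,s\in\{0,1\}^*$ be $\frac{7}{3}$-power-free words such that $|w|=2^{i+1}-1$ or $|w|=3\cdot 2^i-1$, and $|s|=2^{j+1}-1$ or $|s|=3\cdot 2^j-1$. Assume also that $|s|\geq|w|$. Let $a\in\{0,1\}$. Then the word $sawawas$ contains a $\frac{7}{3}$-power (i.e., is not $\frac{7}{3}$-power-free).
   Context: A word $w'$ is a subword of $w$ if $w=uw'v$ for some words $u,v$. For a rational $\alpha\ge 1$, an $\alpha$-power is a word of the form $x^nx'$ with $x$ a nonempty word, $x'$ a prefix of $x$, $n$ a nonnegative integer and $n+|x'|/|x|=\alpha$. A word is $\alpha$-power-free if none of its subwords is a $\beta$-power for any rational $\beta\geq\alpha$; otherwise it contains an $\alpha$-power. *)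

(* Defs.v *)
From mathcomp Require Import all_boot.
Set Implicit Arguments. Unset Strict Implicit. Unset Printing Implicit Defensive.

Definition subword (w' w : seq bool) : Prop :=
  exists u v, w = u ++ w' ++ v.

Definition wpow (x : seq bool) (n : nat) : seq bool := flatten (nseq n x).

(* y is a beta-power with beta = num/den (den > 0): y = x^n x', x nonempty,
   x' a prefix of x, and n + |x'|/|x| = num/den, i.e.
   den * (n*|x| + |x'|) = num * |x|. *)
Definition is_ratpower (num den : nat) (y : seq bool) : Prop :=
  exists (x x' : seq bool) (n : nat),
    0 < size x /\ prefix x' x /\ y = wpow x n ++ x' /\
    den * (n * size x + size x') = num * size x.

Definition contains_power (num den : nat) (w : seq bool) : Prop :=
  exists (y : seq bool) (p q : nat),
    subword y w /\ 0 < q /\ num * q <= p * den /\ is_ratpower p q y.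

Definition power_free (num den : nat) (w : seq bool) : Prop :=
  ~ contains_power num den w.

(* Main.v *)
Require Import Defs.
From mathcomp Require Import all_boot zify.
From Stdlib Require Import Classical.
Set Implicit Arguments. Unset Strict Implicit. Unset Printing Implicit Defensive.

Definition hasrep (z : seq bool) := exists i L P, 0 < P /\ 7 * P <= 3 * L /\ i + L <= size z /\
  forall k, k + P < L -> nth false z (i + k) = nth false z (i + (k + P)).

Lemma periodic_take (y : seq bool) P m :
  (forall k, k + P < size y -> nth false y k = nth false y (k + P)) ->
  m <= size y - P -> take m (drop P y) = take m y.
Proof.
move=> Hp Hm; apply: (@eq_from_nth _ false).
  rewrite !size_take_min size_drop; lia.
move=> k; rewrite size_take_min size_drop => hk.
have hk1 : k < m by lia.
rewrite !nth_take // nth_drop addnC (Hp k) //; lia.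
Qed.

Lemma wposS (x : seq bool) n : wpow x n.+1 = x ++ wpow x n.
Proof. by []. Qed.

Lemma periodic_decomp P : 0 < P -> forall n (y : seq bool),
  (forall k, k + P < size y -> nth false y k = nth false y (k + P)) ->
  n * P <= size y < n.+1 * P ->
  y = wpow (take P y) n ++ take (size y - n * P) (take P y).
Proof.
move=> HP; elim=> [|n IH] y Hp Hs.
  rewrite /= -take_min.
  have -> : minn (size y - 0 * P) P = size y by lia.
  by rewrite take_size.
have Hy' : forall k, k + P < size (drop P y) -> nth false (drop P y) k = nth false (drop P y) (k + P).
  move=> k; rewrite size_drop => hk; rewrite !nth_drop.
  have -> : P + (k + P) = (P + k) + P by lia.
  apply: Hp; lia.
have := IH (drop P y) Hy'; rewrite size_drop => E.
have {}E := E ltac:(lia).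
rewrite wposS -catA.
rewrite -{1}(cat_take_drop P y); congr (_ ++ _).
rewrite {1}E.
have Hsz : P <= size y by lia.
case: n IH E Hs => [|n] IH E Hs.
  rewrite /= -!take_min.
  rewrite periodic_take //; try lia.
  congr take; lia.
rewrite periodic_take //; last lia.
rewrite -!take_min.
congr (_ ++ take _ _); lia.
Qed.

Lemma hasrep_cp z : hasrep z -> contains_power 7 3 z.
Proof.
case=> i [L [P [HP [H7 [HL Hper]]]]].
set y := take L (drop i z).
have Hsy : size y = L by rewrite size_take_min size_drop; lia.
have Hyp : forall k, k + P < size y -> nth false y k = nth false y (k + P).
  move=> k; rewrite Hsy => hk.
  have hk1 : k < L by lia. have hk2 : k + P < L by lia.
  rewrite /y !nth_take // !nth_drop; exact: Hper.
exists y, L, P; split.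
  exists (take i z), (drop L (drop i z)). by rewrite /y !cat_take_drop.
split=> //; split; first lia.
exists (take P y), (take (size y - (L %/ P) * P) (take P y)), (L %/ P).
have HsP : size (take P y) = P by rewrite size_take_min; lia.
split; first lia. split; first exact: prefix_take.
split.
  apply: periodic_decomp => //. rewrite Hsy.
  have := leq_trunc_div L P. have := ltn_ceil L HP. lia.
rewrite HsP size_take_min HsP Hsy.
have := leq_trunc_div L P. have := ltn_ceil L HP. 
case: ltnP => h1 h2 h3; nia.
Qed.
Ltac bcase := repeat match goal with |- context[nth false ?z ?k] => case: (nth false z k) end.
Ltac norm := rewrite -?addnA ?(addSn, add0n, addn0).

Lemma win z i L P : 0 < P -> 7 * P <= 3 * L -> i + L <= size z ->
  (forall k, k + P < L -> nth false z (i + k) = nth false z (i + (k + P))) -> hasrep z.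
Proof. move=> *; by exists i, L, P. Qed.

Lemma cube z i : ~ hasrep z -> i + 3 <= size z ->
  nth false z i = nth false z (i+1) -> nth false z (i+1) != nth false z (i+2).
Proof.
move=> H Hs h1; apply/negP => /eqP h2; apply: H; apply: (@win z i 3 1) => // k hk.
case: k hk => [|[|k]] hk; norm => //; lia.
Qed.

Lemma alt5 z i : ~ hasrep z -> i + 5 <= size z ->
  nth false z i != nth false z (i+1) -> nth false z (i+1) != nth false z (i+2) ->
  nth false z (i+2) != nth false z (i+3) -> nth false z (i+3) != nth false z (i+4) -> False.
Proof.
move=> H Hs h1 h2 h3 h4; apply: H; apply: (@win z i 5 2) => // k hk.
case: k hk => [|[|[|k]]] hk; norm; try lia; move: h1 h2 h3 h4; norm; bcase; by [].
Qed.

Lemma pat3 z c : ~ hasrep z -> c + 7 <= size z ->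
  nth false z c != nth false z (c+1) -> nth false z (c+1) = nth false z (c+2) ->
  nth false z (c+2) != nth false z (c+3) -> nth false z (c+3) != nth false z (c+4) ->
  nth false z (c+4) = nth false z (c+5) -> nth false z (c+5) != nth false z (c+6) -> False.
Proof.
move=> H Hs h1 h2 h3 h4 h5 h6; apply: H; apply: (@win z c 7 3) => // k hk.
case: k hk => [|[|[|[|k]]]] hk; norm; try lia; move: h1 h2 h3 h4 h5 h6; norm; bcase; by [].
Qed.

Lemma parity z : ~ hasrep z -> forall g d, 0 < g -> 1 <= d -> d + g + 2 < size z ->
  nth false z d = nth false z (d+1) -> nth false z (d+g) = nth false z (d+g+1) -> g %% 2 = 0.
Proof.
move=> H; elim/ltn_ind => g IH d Hg Hd Hs Hdd Hee.
case: (classic (exists h, 0 < h < g /\ nth false z (d+h) = nth false z (d+h+1))) => [[h [Hh Hdh]]|HN].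
  have E1 := IH h ltac:(lia) d ltac:(lia) Hd ltac:(lia) Hdd Hdh.
  have Ee : d + h + (g - h) = d + g by lia.
  have E2 := IH (g - h) ltac:(lia) (d + h) ltac:(lia) ltac:(lia) ltac:(lia) Hdh.
  rewrite Ee in E2. have {E2} := E2 Hee. lia.
have HN' : forall h, 0 < h < g -> nth false z (d+h) != nth false z (d+h+1).
  move=> h hh; apply/negP => /eqP e; apply: HN; by exists h.
case: (boolP (g %% 2 == 0)) => [/eqP //|hodd].
have [c Ec] : exists c, d = c + 1 by exists (d - 1); lia.
subst d.
have [g1|[g3|g5]] : g = 1 \/ g = 3 \/ 5 <= g by lia.
- subst g. have := cube H (i:=c+1) ltac:(lia) Hdd. move: Hee; norm => ->. by rewrite eqxx.
- subst g. exfalso.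
  have h0 : nth false z c != nth false z (c+1).
    apply/negP => /eqP e. have := cube H (i:=c) ltac:(lia) e. move: Hdd; norm => ->. by rewrite eqxx.
  have h5 : nth false z (c+5) != nth false z (c+6).
    have := cube H (i:=c+4) ltac:(lia). norm. apply. move: Hee; norm; by [].
  have h2 := HN' 1 ltac:(lia). have h3 := HN' 2 ltac:(lia).
  move: Hdd Hee h2 h3; norm => Hdd Hee h2 h3.
  exact: (pat3 H (c:=c) ltac:(lia) h0 Hdd h2 h3 Hee h5).
- exfalso.
  have h1 := HN' 1 ltac:(lia). have h2 := HN' 2 ltac:(lia).
  have h3 := HN' 3 ltac:(lia). have h4 := HN' 4 ltac:(lia).
  move: h1 h2 h3 h4; norm => h1 h2 h3 h4.
  apply: (alt5 H (i:=c+2)) ltac:(lia) _ _ _ _; norm => //.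
Qed.

Lemma nthE (z : seq bool) a b : a = b -> nth false z a = nth false z b.
Proof. by move=> ->. Qed.

Lemma lift z z' S : S + 2 * size z' <= size z ->
  (forall t, t < size z' -> nth false z (S + 2 * t) = nth false z' t /\
                           nth false z (S + 2 * t + 1) = ~~ nth false z' t) ->
  hasrep z' -> hasrep z.
Proof.
move=> Hs Hz [i [L [P [HP [H7 [HL Hper]]]]]].
apply: (@win z (S + 2 * i) (2 * L) (2 * P)); try lia.
move=> k hk.
have [q [e [He Hk]]] : exists q e, e < 2 /\ k = 2 * q + e.
  exists (k %/ 2), (k %% 2); lia.
have hq : q + P < L by lia.
have E := Hper q hq.
case: e He Hk => [|[|e]] He Hk; try lia.
- rewrite (nthE z (_ : S + 2 * i + k = S + 2 * (i + q))); last lia.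
  rewrite (nthE z (_ : S + 2 * i + (k + 2 * P) = S + 2 * (i + (q + P)))); last lia.
  rewrite (Hz (i+q) ltac:(lia)).1 (Hz (i + (q+P)) ltac:(lia)).1 //.
- rewrite (nthE z (_ : S + 2 * i + k = S + 2 * (i + q) + 1)); last lia.
  rewrite (nthE z (_ : S + 2 * i + (k + 2 * P) = S + 2 * (i + (q + P)) + 1)); last lia.
  rewrite (Hz (i+q) ltac:(lia)).2 (Hz (i + (q+P)) ltac:(lia)).2 E //.
Qed.

Definition shape n z A := n - 1 <= A /\ A + 2 * (n + 1) + 1 + (n - 1) <= size z /\
  forall k, k <= n + 1 -> nth false z (A + k) = nth false z (A + (n + 1) + k).

Lemma bneg (a b : bool) : a != b -> b = ~~ a.
Proof. by case: a; case: b. Qed.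

Lemma main n : forall z A, shape n z A -> hasrep z.
Proof.
elim/ltn_ind: n => n IH z A [HA [Hsz Hsh]].
case: (leqP n 2) => Hn2.
  apply: (@win z A (2 * (n + 1) + 1) (n + 1)); try lia.
  move=> k hk. rewrite (nthE z (_ : A + (k + (n + 1)) = A + (n + 1) + k)); last lia.
  apply: Hsh; lia.
case: (classic (hasrep z)) => // H.
have [d0 [Hd0 Hdd0]] : exists d0, A <= d0 <= A + 3 /\ nth false z d0 = nth false z (d0 + 1).
  apply: NNPP => HN; apply: (alt5 H (i := A)); try lia;
  rewrite -?addnA; apply/negP => /eqP e; apply: HN;
  [exists A | exists (A+1) | exists (A+2) | exists (A+3)]; rewrite -?addnA; split => //; lia.
have Hp : forall j, j <= n + 1 -> nth false z (A + j) = nth false z (A + j + (n + 1)).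
  move=> j hj; rewrite (nthE z (_ : A + j + (n + 1) = A + (n + 1) + j)); last lia. exact: Hsh.
case: (boolP (n %% 2 == 0)) => Hev.
  exfalso.
  have := parity H (g := n + 1) (d := d0) ltac:(lia) ltac:(lia) ltac:(lia) Hdd0.
  have -> : nth false z (d0 + (n + 1)) = nth false z d0.
    have := Hp (d0 - A) ltac:(lia). rewrite (nthE z (_ : A + (d0 - A) = d0)); last lia.
    rewrite (nthE z (_ : A + (d0 - A) + (n + 1) = d0 + (n + 1))); last lia. by [].
  have -> : nth false z (d0 + (n + 1) + 1) = nth false z (d0 + 1).
    have := Hp (d0 + 1 - A) ltac:(lia). rewrite (nthE z (_ : A + (d0 + 1 - A) = d0 + 1)); last lia.
    rewrite (nthE z (_ : A + (d0 + 1 - A) + (n + 1) = d0 + (n + 1) + 1)); last lia. by [].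
  move=> /(_ Hdd0). lia.
have ND : forall k, 1 <= k -> k + 2 < size z -> k %% 2 != d0 %% 2 ->
    nth false z (k + 1) = ~~ nth false z k.
  move=> k hk1 hk2 hpar; apply: bneg; apply/negP => /eqP e.
  case: (ltngtP k d0) => hkd.
  - have := parity H (g := d0 - k) (d := k) ltac:(lia) ltac:(lia) ltac:(lia) e.
    rewrite (nthE z (_ : k + (d0 - k) = d0)); last lia.
    rewrite (nthE z (_ : k + (d0 - k) + 1 = d0 + 1)); last lia.
    move=> /(_ Hdd0). move: hpar => /eqP. lia.
  - have := parity H (g := k - d0) (d := d0) ltac:(lia) ltac:(lia) ltac:(lia) Hdd0.
    rewrite (nthE z (_ : d0 + (k - d0) = k)); last lia.
    rewrite (nthE z (_ : d0 + (k - d0) + 1 = k + 1)); last lia.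
    move=> /(_ e). move: hpar => /eqP. lia.
  - subst k. by rewrite eqxx in hpar.
have [m Em] : exists m, n = 2 * m + 1 by exists (n %/ 2); lia.
subst n.
have Hm : m < 2 * m + 1 by lia.
pose S := if A %% 2 != d0 %% 2 then A - 2 * m + 2 else A - 2 * m + 1.
have HS : S %% 2 != d0 %% 2.
  rewrite /S; case: ifP => h; move: h; [move=> /eqP h | move=> /negbFE /eqP h]; apply/eqP; lia.
pose z' := mkseq (fun t => nth false z (S + 2 * t)) (4 * m + 1).
have Hz' : forall t, t < 4 * m + 1 -> nth false z' t = nth false z (S + 2 * t).
  move=> t ht; by rewrite /z' nth_mkseq.
apply: (@lift z z' S).
- rewrite size_mkseq /S; case: ifP => _; lia.
- rewrite size_mkseq => t ht; rewrite Hz' //; split => //.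
  apply: ND.
  + rewrite /S; case: ifP => _; lia.
  + rewrite /S; case: ifP => _; lia.
  + move: HS => /eqP HS; apply/eqP; lia.
apply: (IH m Hm z' (m - 1)).
split; first lia. split; first by rewrite size_mkseq; lia.
move=> k hk.
rewrite !Hz'; try lia.
rewrite /S; case: ifP => hAd.
- rewrite (nthE z (_ : A - 2 * m + 2 + 2 * (m - 1 + k) = A + 2 * k)); last lia.
  rewrite (nthE z (_ : A - 2 * m + 2 + 2 * (m - 1 + (m + 1) + k) = A + 2 * k + (2 * m + 1 + 1))); last lia.
  apply: Hp; lia.
- move: hAd => /negbFE /eqP hAd.
  case: k hk => [|k] hk.
  + rewrite (nthE z (_ : A - 2 * m + 1 + 2 * (m - 1 + 0) = A - 1)); last lia.
    rewrite (nthE z (_ : A - 2 * m + 1 + 2 * (m - 1 + (m + 1) + 0) = A + 2 * m + 1)); last lia.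
    have E1 := ND (A - 1) ltac:(lia) ltac:(lia) ltac:(apply/eqP; lia).
    have E2 := ND (A + 2 * m + 1) ltac:(lia) ltac:(lia) ltac:(apply/eqP; lia).
    rewrite (nthE z (_ : A - 1 + 1 = A)) in E1; last lia.
    rewrite (nthE z (_ : A + 2 * m + 1 + 1 = A + 0 + (2 * m + 1 + 1))) in E2; last lia.
    have E3 := Hp 0 ltac:(lia).
    move: E1 E2 E3. rewrite addn0. bcase; by [].
  + rewrite (nthE z (_ : A - 2 * m + 1 + 2 * (m - 1 + k.+1) = A + (2 * k + 1))); last lia.
    rewrite (nthE z (_ : A - 2 * m + 1 + 2 * (m - 1 + (m + 1) + k.+1) = A + (2 * k + 1) + (2 * m + 1 + 1))); last lia.
    apply: Hp; lia.
Qed.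

Theorem lemma7 (i j : nat) (w s : seq bool) (a : bool) :
  0 < i -> 0 < j ->
  power_free 7 3 w -> power_free 7 3 s ->
  (size w = 2 ^ i.+1 - 1 \/ size w = 3 * 2 ^ i - 1) ->
  (size s = 2 ^ j.+1 - 1 \/ size s = 3 * 2 ^ j - 1) ->
  size w <= size s ->
  contains_power 7 3 (s ++ [:: a] ++ w ++ [:: a] ++ w ++ [:: a] ++ s).
Proof.
move=> _ _ _ _ _ _ Hws.
apply: hasrep_cp.
apply: (@main (size w) _ (size s)).
set u := a :: w.
have Ez : s ++ [:: a] ++ w ++ [:: a] ++ w ++ [:: a] ++ s = s ++ (u ++ u ++ (a :: s)) by [].
rewrite Ez.
split; first lia.
split; first by rewrite !size_cat /=; lia.
move=> k hk.
have Hu : size u = size w + 1 by rewrite /u /=; lia.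
rewrite (nth_cat false s _ (size s + k)) (nth_cat false s _ (size s + (size w + 1) + k)).
have -> : (size s + k < size s) = false by lia.
have -> : (size s + (size w + 1) + k < size s) = false by lia.
have -> : size s + k - size s = k by lia.
have -> : size s + (size w + 1) + k - size s = size u + k by lia.
rewrite (nth_cat false u _ (size u + k)).
have -> : (size u + k < size u) = false by lia.
have -> : size u + k - size u = k by lia.
case: (ltnP k (size u)) => hku.
  by rewrite !nth_cat hku.
have -> : k = size u by lia.
rewrite !nth_cat ltnn subnn /=.
by rewrite /u.
Qed.
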